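(* Let $U=[n,u,E,B]$, with $n(t,x)\in\mathbb{R}$ and $u,E,B(t,x)\in\mathbb{R}^3$, satisfy for all $t\geq0$, $x\in\mathbb{R}^3$ the linear system \begin{equation*} \partial_t n +\gamma \nabla\cdot u =0,\quad \partial_t u+\gamma \nabla n +\beta {E}-\mu\Delta u=0,\quad \partial_t {E} - \nabla \times {B} -\beta u = 0,\quad \partial_t {B} + \nabla \times {E} = 0,\quad \nabla \cdot{E} = -\frac{\beta}{\gamma}n, \ \ \nabla\cdot {B} =0. \end{equation*} Then there is a time-frequency functional $\mathcal{E}(\hat U(t,k))$ (a real-valued function of $k$ and of the value $\hat U(t,k)\in\mathbb{C}^{10}$) and a constant $c>0$ such that \begin{equation*} \mathcal{E}(\hat{U}(t,k))\sim |\hat{U}(t,k)|^2:=|\hat{n}(t,k)|^2+|\hat{u}(t,k)|^2+|\hat{E}(t,k)|^2+|\hat{B}(t,k)|^2 \end{equation*} and \begin{equation*} \partial_t \mathcal{E}(\hat{U}(t,k))+c|\hat{n}(t,k)|^2+c|k|^2 |\hat{u}(t,k)|^2 +c\frac{|k|^2}{(1+|k|^2)^2}|\hat{E}(t,k)|^2+c\frac{|k|^4}{(1+|k|^2)^3}|\hat{B}(t,k)|^2 \leq 0 \end{equation*} for all $t\geq 0$, $k\in \mathbb{R}^3$. In particular, \begin{equation*} \partial_t \mathcal{E}(\hat{U}(t,k))+c \frac{|k|^4}{(1+|k|^2)^3} \mathcal{E}(\hat{U}(t,k))\leq 0 \end{equation*} for all $t\geq 0$, $k\in \mathbb{R}^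3$.
   Context: $\gamma,\beta,\mu>0$ are constants. $\hat f(t,k)=\int_{\mathbb{R}^3}e^{-ik\cdot x}f(t,x)\,dx$ is the Fourier transform in $x$. $A\sim B$ means $cB\le A\le CB$ for constants $0<c\le C$ independent of $t,k$. *)

(* Defs.v *)
From Stdlib Require Import Reals.
From Coquelicot Require Import Coquelicot.

(* Real 3-vectors (frequencies k) and complex 3-vectors (Fourier values of u, E, B). *)
Record R3 := mkR3 { r1 : R; r2 : R; r3 : R }.
Record C3 := mkC3 { c1 : C; c2 : C; c3 : C }.

Open Scope C_scope.

Definition normR3sq (k : R3) : R :=
  (r1 k * r1 k + r2 k * r2 k + r3 k * r3 k)%R.

Definition normC3sq (v : C3) : R :=
  (Cmod (c1 v) ^ 2 + Cmod (c2 v) ^ 2 + Cmod (c3 v) ^ 2)%R.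

Definition normCsq (z : C) : R := (Cmod z ^ 2)%R.

(* k . v  (bilinear, no conjugation) for k real, v complex *)
Definition dotRC (k : R3) (v : C3) : C :=
  RtoC (r1 k) * c1 v + RtoC (r2 k) * c2 v + RtoC (r3 k) * c3 v.

Definition crossRC (k : R3) (v : C3) : C3 :=
  mkC3 (RtoC (r2 k) * c3 v - RtoC (r3 k) * c2 v)
       (RtoC (r3 k) * c1 v - RtoC (r1 k) * c3 v)
       (RtoC (r1 k) * c2 v - RtoC (r2 k) * c1 v).

Definition addC3 (v w : C3) : C3 := mkC3 (c1 v + c1 w) (c2 v + c2 w) (c3 v + c3 w).
Definition scalC3 (a : C) (v : C3) : C3 := mkC3 (a * c1 v) (a * c2 v) (a * c3 v).
Definition C3ofR3 (k : R3) : C3 := mkC3 (RtoC (r1 k)) (RtoC (r2 k)) (RtoC (r3 k)).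

Definition is_derive_C (f : R -> C) (t : R) (l : C) : Prop :=
  is_derive (fun s => Re (f s)) t (Re l) /\ is_derive (fun s => Im (f s)) t (Im l).

Definition is_derive_C3 (f : R -> C3) (t : R) (l : C3) : Prop :=
  is_derive_C (fun s => c1 (f s)) t (c1 l) /\
  is_derive_C (fun s => c2 (f s)) t (c2 l) /\
  is_derive_C (fun s => c3 (f s)) t (c3 l).

(* The Fourier transform (convention  f^(k) = \int e^{-i k.x} f(x) dx, so that
   d/dx_j  becomes  multiplication by  i k_j) of the linear system, at a fixed
   frequency k, for t >= 0:
     d/dt n + gamma i k.u = 0
     d/dt u + gamma i k n + beta E + mu |k|^2 u = 0
     d/dt E - i k x B - beta u = 0
     d/dt B + i k x E = 0
     i k.E = -(beta/gamma) n,   i k.B = 0. *)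
Definition fourier_solution (gamma beta mu : R) (k : R3)
  (n : R -> C) (u E B : R -> C3) : Prop :=
  forall t : R, (0 <= t)%R ->
    is_derive_C n t (- (RtoC gamma * Ci * dotRC k (u t))) /\
    is_derive_C3 u t
      (scalC3 (-1)
        (addC3 (scalC3 (RtoC gamma * Ci * n t) (C3ofR3 k))
          (addC3 (scalC3 (RtoC beta) (E t))
                 (scalC3 (RtoC (mu * normR3sq k)) (u t))))) /\
    is_derive_C3 E t
      (addC3 (scalC3 Ci (crossRC k (B t))) (scalC3 (RtoC beta) (u t))) /\
    is_derive_C3 B t (scalC3 (-1) (scalC3 Ci (crossRC k (E t)))) /\
    Ci * dotRC k (E t) = - (RtoC (beta / gamma) * n t) /\
    Ci * dotRC k (B t) = 0.

Definition normUsq (n : C) (u E B : C3) : R :=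
  (normCsq n + normC3sq u + normC3sq E + normC3sq B)%R.

Close Scope C_scope.

(* Main.v *)
Require Import Defs.
From Stdlib Require Import Reals Lra Psatz.
From Coquelicot Require Import Coquelicot.
Open Scope R_scope.
Definition Ef (A1 A2 A3 k1 k2 k3 nr ni x1 y1 x2 y2 x3 y3 e1 f1 e2 f2 e3 f3 g1 h1 g2 h2 g3 h3 : R) : R :=
  /2 * (nr^2+ni^2 + (x1^2+y1^2+x2^2+y2^2+x3^2+y3^2) + (e1^2+f1^2+e2^2+f2^2+e3^2+f3^2) + (g1^2+h1^2+g2^2+h2^2+g3^2+h3^2))
  + A1 * ((k1*y1+k2*y2+k3*y3)*nr - (k1*x1+k2*x2+k3*x3)*ni)
  + A2 * (x1*e1+y1*f1+x2*e2+y2*f2+x3*e3+y3*f3)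
  + A3 * (e1*(k2*h3-k3*h2)+e2*(k3*h1-k1*h3)+e3*(k1*h2-k2*h1) - (f1*(k2*g3-k3*g2)+f2*(k3*g1-k1*g3)+f3*(k1*g2-k2*g1))).

Definition dvgen (A1 A2 A3 g b m k1 k2 k3 nr ni x1 y1 x2 y2 x3 y3 e1 f1 e2 f2 e3 f3 g1 h1 g2 h2 g3 h3 : R) : R :=
  Ef A1 A2 A3 k1 k2 k3 (nr+(g*(k1*y1+k2*y2+k3*y3))) (ni+(-(g*(k1*x1+k2*x2+k3*x3)))) (x1+(g*k1*ni-b*e1-m*(k1*k1+k2*k2+k3*k3)*x1)) (y1+(-(g*k1*nr)-b*f1-m*(k1*k1+k2*k2+k3*k3)*y1)) (x2+(g*k2*ni-b*e2-m*(k1*k1+k2*k2+k3*k3)*x2)) (y2+(-(g*k2*nr)-b*f2-m*(k1*k1+k2*k2+k3*k3)*y2)) (x3+(g*k3*ni-b*e3-m*(k1*k1+k2*k2+k3*k3)*x3)) (y3+(-(g*k3*nr)-b*f3-m*(k1*k1+k2*k2+k3*k3)*y3)) (e1+(-(k2*h3-k3*h2)+b*x1)) (f1+((k2*g3-k3*g2)+b*y1)) (e2+(-(k3*h1-k1*h3)+b*x2)) (f2+((k3*g1-k1*g3)+b*y2)) (e3+(-(k1*h2-k2*h1)+b*x3)) (f3+((k1*g2-k2*g1)+b*y3)) (g1+((k2*f3-k3*f2))) (h1+(-(k2*e3-k3*e2))) (g2+((k3*f1-k1*f3))) (h2+(-(k3*e1-k1*e3))) (g3+((k1*f2-k2*f1)))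 (h3+(-(k1*e2-k2*e1)))
  - Ef A1 A2 A3 k1 k2 k3 nr ni x1 y1 x2 y2 x3 y3 e1 f1 e2 f2 e3 f3 g1 h1 g2 h2 g3 h3
  - Ef A1 A2 A3 k1 k2 k3 (g*(k1*y1+k2*y2+k3*y3)) (-(g*(k1*x1+k2*x2+k3*x3))) (g*k1*ni-b*e1-m*(k1*k1+k2*k2+k3*k3)*x1) (-(g*k1*nr)-b*f1-m*(k1*k1+k2*k2+k3*k3)*y1) (g*k2*ni-b*e2-m*(k1*k1+k2*k2+k3*k3)*x2) (-(g*k2*nr)-b*f2-m*(k1*k1+k2*k2+k3*k3)*y2) (g*k3*ni-b*e3-m*(k1*k1+k2*k2+k3*k3)*x3) (-(g*k3*nr)-b*f3-m*(k1*k1+k2*k2+k3*k3)*y3) (-(k2*h3-k3*h2)+b*x1) ((k2*g3-k3*g2)+b*y1) (-(k3*h1-k1*h3)+b*x2) ((k3*g1-k1*g3)+b*y2) (-(k1*h2-k2*h1)+b*x3) ((k1*g2-k2*g1)+b*y3) ((k2*f3-k3*f2)) (-(k2*e3-k3*e2)) ((k3*f1-k1*f3)) (-(k3*e1-k1*e3)) ((k1*f2-k2*f1)) (-(k1*e2-k2*e1)).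

Lemma ident A1 A2 A3 g b m k1 k2 k3 nr ni x1 y1 x2 y2 x3 y3 e1 f1 e2 f2 e3 f3 g1 h1 g2 h2 g3 h3 :
  b <> 0 -> g <> 0 ->
  nr = g/b*(k1*f1+k2*f2+k3*f3) -> ni = -(g/b)*(k1*e1+k2*e2+k3*e3) ->
  dvgen A1 A2 A3 g b m k1 k2 k3 nr ni x1 y1 x2 y2 x3 y3 e1 f1 e2 f2 e3 f3 g1 h1 g2 h2 g3 h3 =
  -(m*(k1*k1+k2*k2+k3*k3)*(x1^2+y1^2 + (x2^2+y2^2) + (x3^2+y3^2))) + A1*(-(g*(k1*k1+k2*k2+k3*k3)+b^2/g)*(nr^2+ni^2) + g*((k1*x1+k2*x2+k3*x3)^2+(k1*y1+k2*y2+k3*y3)^2) - m*(k1*k1+k2*k2+k3*k3)*((k1*y1+k2*y2+k3*y3)*nr - (k1*x1+k2*x2+k3*x3)*ni)) + A2*(-b*(e1^2+f1^2 + (e2^2+f2^2) + (e3^2+f3^2)) - b*(nr^2+ni^2) + b*(x1^2+y1^2 + (x2^2+y2^2) + (x3^2+y3^2)) - m*(k1*k1+k2*k2+k3*k3)*(x1*e1+y1*f1+x2*e2+y2*f2+x3*e3+y3*f3) + (y1*(k2*g3-k3*g2)-x1*(k2*h3-k3*h2)+(y2*(k3*g1-k1*g3)-x2*(k3*h1-k1*h3))+(y3*(k1*g2-k2*g1)-x3*(k1*h2-k2*h1)))) + A3*(-((k2*g3-k3*g2)^2+(k3*g1-k1*g3)^2+(k1*g2-k2*g1)^2+(k2*h3-k3*h2)^2+(k3*h1-k1*h3)^2+(k1*h2-k2*h1)^2)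 + ((k2*e3-k3*e2)^2+(k3*e1-k1*e3)^2+(k1*e2-k2*e1)^2+(k2*f3-k3*f2)^2+(k3*f1-k1*f3)^2+(k1*f2-k2*f1)^2) - b*(y1*(k2*g3-k3*g2)-x1*(k2*h3-k3*h2)+(y2*(k3*g1-k1*g3)-x2*(k3*h1-k1*h3))+(y3*(k1*g2-k2*g1)-x3*(k1*h2-k2*h1)))).
Proof. intros Hb Hg Hnr Hni. unfold dvgen, Ef. rewrite Hnr, Hni. field. auto. Qed.
Lemma Ef_derive A1 A2 A3 k1 k2 k3 (F0 F1 F2 F3 F4 F5 F6 F7 F8 F9 F10 F11 F12 F13 F14 F15 F16 F17 F18 F19 : R -> R) (D0 D1 D2 D3 D4 D5 D6 D7 D8 D9 D10 D11 D12 D13 D14 D15 D16 D17 D18 D19 : R) t :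
  is_derive F0 t D0 ->
  is_derive F1 t D1 ->
  is_derive F2 t D2 ->
  is_derive F3 t D3 ->
  is_derive F4 t D4 ->
  is_derive F5 t D5 ->
  is_derive F6 t D6 ->
  is_derive F7 t D7 ->
  is_derive F8 t D8 ->
  is_derive F9 t D9 ->
  is_derive F10 t D10 ->
  is_derive F11 t D11 ->
  is_derive F12 t D12 ->
  is_derive F13 t D13 ->
  is_derive F14 t D14 ->
  is_derive F15 t D15 ->
  is_derive F16 t D16 ->
  is_derive F17 t D17 ->
  is_derive F18 t D18 ->
  is_derive F19 t D19 ->
  is_derive (fun s => Ef A1 A2 A3 k1 k2 k3 (F0 s) (F1 s) (F2 s) (F3 s) (F4 s) (F5 s) (F6 s) (F7 s) (F8 s) (F9 s) (F10 s) (F11 s) (F12 s) (F13 s) (F14 s) (F15 s) (F16 s) (F17 s) (F18 s) (F19 s)) t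
   (Ef A1 A2 A3 k1 k2 k3 (F0 t + D0) (F1 t + D1) (F2 t + D2) (F3 t + D3) (F4 t + D4) (F5 t + D5) (F6 t + D6) (F7 t + D7) (F8 t + D8) (F9 t + D9) (F10 t + D10) (F11 t + D11) (F12 t + D12) (F13 t + D13) (F14 t + D14) (F15 t + D15) (F16 t + D16) (F17 t + D17) (F18 t + D18) (F19 t + D19) - Ef A1 A2 A3 k1 k2 k3 (F0 t) (F1 t) (F2 t) (F3 t) (F4 t) (F5 t) (F6 t) (F7 t) (F8 t) (F9 t) (F10 t) (F11 t) (F12 t) (F13 t) (F14 t) (F15 t) (F16 t) (F17 t) (F18 t) (F19 t) - Ef A1 A2 A3 k1 k2 k3 D0 D1 D2 D3 D4 D5 D6 D7 D8 D9 D10 D11 D12 D13 D14 D15 D16 D17 D18 D19).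
Proof.
  intros H0 H1 H2 H3 H4 H5 H6 H7 H8 H9 H10 H11 H12 H13 H14 H15 H16 H17 H18 H19.
  unfold Ef. auto_derive.
  - repeat split; eexists; eassumption.
  - try replace (Derive (fun x => F0 x) t) with D0 by (symmetry; apply is_derive_unique; exact H0). try replace (Derive (fun x => F1 x) t) with D1 by (symmetry; apply is_derive_unique; exact H1). try replace (Derive (fun x => F2 x) t) with D2 by (symmetry; apply is_derive_unique; exact H2). try replace (Derive (fun x => F3 x) t) with D3 by (symmetry; apply is_derive_unique; exact H3). try replace (Derive (fun x => F4 x) t) with D4 by (symmetry; apply is_derive_unique; exact H4). try replace (Derive (fun x => F5 x) t) with D5 by (symmetry; apply is_derive_unique; exact H5). try replace (Derive (fun x => F6 x) t) with D6 by (symmetry; apply is_derive_unique; exact H6). try replace (Derive (fun x => F7 x) t) with D7 by (symmetry; apply is_derive_unique; exact H7). try replace (Derive (fun x => F8 x) t) with D8 by (symmetry; apply is_derive_unique; exact H8). try replace (Derive (fun x => F9 x) t) with D9 by (symmetry; apply is_derive_unique; exact H9). try replace (Derive (fun x => F10 x) t) with D10 by (symmetry; apply is_derive_unique; exact H10). try replace (Derive (fun x => F11 x) t) with D11 by (symmetry; apply is_derive_unique; exact H11). try replace (Derive (fun x => F12 x) t) with D12 by (symmetry; apply is_derive_unique; exact H12). try replace (Derive (fun x => F13 x) t) with D13 by (symmetry; apply is_derive_unique; exact H13). try replace (Derive (fun x => F14 x) t) with D14 by (symmetry; apply is_derive_unique; exact H14). try replace (Derive (fun x => F15 x) t) with D15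 by (symmetry; apply is_derive_unique; exact H15). try replace (Derive (fun x => F16 x) t) with D16 by (symmetry; apply is_derive_unique; exact H16). try replace (Derive (fun x => F17 x) t) with D17 by (symmetry; apply is_derive_unique; exact H17). try replace (Derive (fun x => F18 x) t) with D18 by (symmetry; apply is_derive_unique; exact H18). try replace (Derive (fun x => F19 x) t) with D19 by (symmetry; apply is_derive_unique; exact H19). ring.
Qed.
Definition m0 g b := g*b^2/(g^2+b^2).
Definition a1c g b m := Rmin (Rmin (m/(16*g)) (m0 g b/(16*m))) (/8).
Definition a2c (g b m : R) : R := Rmin (Rmin (Rmin (m/(16*b)) (b/(16*m))) (Rmin (m*b/64) (m/128))) (/8).
Definition a3c g b m := 16*(a2c g b m)^2/m.
Definition cc g b m := Rmin (Rmin (m/2) (a1c g b m * m0 g b/2)) (Rmin (a2c g b m*b/2) (a3c g b m/2)).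
Definition W1 K := /(1+K).
Definition W2 K := K/(1+K)^2.
Definition W3 K := K/(1+K)^3.

Lemma amgm T A B r p q : T^2 <= r*(A*B) -> 0 <= A -> 0 <= B -> 0 <= p -> 0 <= q ->
  r <= 4*p*q -> T <= p*A + q*B.
Proof.
  intros H HA HB Hp Hq Hr.
  assert (H1 : 0 <= p*A + q*B) by nra.
  assert (H2 : (p*A + q*B)^2 = (p*A - q*B)^2 + 4*p*q*(A*B)) by ring.
  assert (H3 : r*(A*B) <= 4*p*q*(A*B)) by (apply Rmult_le_compat_r; nra).
  pose proof (pow2_ge_0 (p*A-q*B)).
  assert (H4 : T^2 <= (p*A+q*B)^2) by lra.
  destruct (Rle_or_lt T (p*A+q*B)) as [Hl|Hl]; auto.
  exfalso. assert ((p*A+q*B)^2 < T^2) by nra. lra.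
Qed.

Lemma m0_facts g b : 0 < g -> 0 < b -> 0 < m0 g b /\ m0 g b <= g /\ m0 g b <= b^2/g.
Proof.
  intros Hg Hb. unfold m0.
  assert (Hd : 0 < g^2+b^2) by nra.
  assert (Hgb : 0 < g*b^2) by (apply Rmult_lt_0_compat; [lra| apply pow_lt; lra]).
  split; [apply Rdiv_lt_0_compat; lra|split].
  - apply Rmult_le_reg_r with (g^2+b^2); auto. unfold Rdiv. rewrite Rmult_assoc, Rinv_l by lra. nra.
  - apply Rmult_le_reg_r with (g*(g^2+b^2)); [nra|].
    unfold Rdiv. replace (g * b ^ 2 * / (g ^ 2 + b ^ 2) * (g * (g ^ 2 + b ^ 2))) with (g*b^2*g) by (field; lra).
    replace (b ^ 2 * / g * (g * (g ^ 2 + b ^ 2))) with (b^2*(g^2+b^2)) by (field; lra). nra.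
Qed.

Lemma Rmin_le3 x y : Rmin x y <= x /\ Rmin x y <= y.
Proof. split; [apply Rmin_l | apply Rmin_r]. Qed.

Lemma consts g b m : 0 < g -> 0 < b -> 0 < m ->
  let a1 := a1c g b m in let a2 := a2c g b m in let a3 := a3c g b m in let c := cc g b m in
  let m' := m0 g b in
  0 < a1 /\ a1*g <= m/16 /\ a1*m <= m'/16 /\ a1 <= /8 /\
  0 < a2 /\ a2*b <= m/16 /\ a2*m <= b/16 /\ 64*a2 <= m*b /\ 128*a2 <= m /\ a2 <= /8 /\
  0 < a3 /\ a3 <= a2*b/4 /\ a3*b^2 <= m/16 /\ a3 <= /8 /\ a2^2 = a3*m/16 /\
  0 < c /\ c <= m/2 /\ c <= a1*m'/2 /\ c <= a2*b/2 /\ c <= a3/2.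
Proof.
  intros Hg Hb Hm a1 a2 a3 c m'.
  destruct (m0_facts g b Hg Hb) as [Hm0 [Hm1 Hm2]]. fold m' in Hm0, Hm1, Hm2.
  assert (A1p : 0 < a1).
  { unfold a1, a1c. fold m'. repeat apply Rmin_glb_lt; try (apply Rdiv_lt_0_compat; lra); lra. }
  assert (A1a : a1 <= m/(16*g)) by (unfold a1, a1c; eapply Rle_trans; [apply Rmin_l|apply Rmin_l]).
  assert (A1b : a1 <= m'/(16*m)) by (unfold a1, a1c; eapply Rle_trans; [apply Rmin_l|apply Rmin_r]).
  assert (A1c : a1 <= /8) by (unfold a1, a1c; apply Rmin_r).
  assert (A2p : 0 < a2).
  { unfold a2, a2c. repeat apply Rmin_glb_lt; try (apply Rdiv_lt_0_compat; nra); try lra. }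
  assert (A2a : a2 <= m/(16*b)) by (unfold a2, a2c; repeat (eapply Rle_trans; [apply Rmin_l|]); lra).
  assert (A2b : a2 <= b/(16*m)).
  { unfold a2, a2c. eapply Rle_trans; [apply Rmin_l|]. eapply Rle_trans; [apply Rmin_l|]. apply Rmin_r. }
  assert (A2c : a2 <= m*b/64).
  { unfold a2, a2c. eapply Rle_trans; [apply Rmin_l|]. eapply Rle_trans; [apply Rmin_r|]. apply Rmin_l. }
  assert (A2d : a2 <= m/128).
  { unfold a2, a2c. eapply Rle_trans; [apply Rmin_l|]. eapply Rle_trans; [apply Rmin_r|]. apply Rmin_r. }
  assert (A2e : a2 <= /8) by (unfold a2, a2c; apply Rmin_r).
  assert (a1*g <= m/16).
  { apply Rmult_le_reg_r with (/g); [apply Rinv_0_lt_compat; lra|].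
    rewrite Rmult_assoc, Rinv_r, Rmult_1_r by lra. eapply Rle_trans; [exact A1a|]. right; field; lra. }
  assert (a1*m <= m'/16).
  { apply Rmult_le_reg_r with (/m); [apply Rinv_0_lt_compat; lra|].
    rewrite Rmult_assoc, Rinv_r, Rmult_1_r by lra. eapply Rle_trans; [exact A1b|]. right; field; lra. }
  assert (B1 : a2*b <= m/16).
  { apply Rmult_le_reg_r with (/b); [apply Rinv_0_lt_compat; lra|].
    rewrite Rmult_assoc, Rinv_r, Rmult_1_r by lra. eapply Rle_trans; [exact A2a|]. right; field; lra. }
  assert (a2*m <= b/16).
  { apply Rmult_le_reg_r with (/m); [apply Rinv_0_lt_compat; lra|].
    rewrite Rmult_assoc, Rinv_r, Rmult_1_r by lra. eapply Rle_trans; [exact A2b|]. right; field; lra. }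
  assert (A3e : a3 * m = 16*a2^2) by (unfold a3, a3c; fold a2; field; lra).
  assert (A3p : 0 < a3) by (unfold a3, a3c; fold a2; apply Rdiv_lt_0_compat; nra).
  assert (a3 <= a2*b/4).
  { apply Rmult_le_reg_r with m; auto. rewrite A3e. nra. }
  assert (a3*b^2 <= m/16).
  { apply Rmult_le_reg_r with m; auto. replace (a3*b^2*m) with ((a3*m)*b^2) by ring. rewrite A3e. nra. }
  assert (a3 <= /8).
  { apply Rmult_le_reg_r with m; auto. rewrite A3e. nra. }
  assert (a2^2 = a3*m/16) by lra.
  assert (Cp : 0 < c).
  { unfold c, cc. fold a1 a2 a3. fold m'. repeat apply Rmin_glb_lt; nra. }
  assert (c <= m/2) by (unfold c, cc; eapply Rle_trans; [apply Rmin_l|apply Rmin_l]).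
  assert (c <= a1*m'/2) by (unfold c, cc; eapply Rle_trans; [apply Rmin_l|apply Rmin_r]).
  assert (c <= a2*b/2) by (unfold c, cc; eapply Rle_trans; [apply Rmin_r|apply Rmin_l]).
  assert (c <= a3/2) by (unfold c, cc; eapply Rle_trans; [apply Rmin_r|apply Rmin_r]).
  repeat split; auto; lra.
Qed.

Lemma amgm_abs T A B : T^2 <= A*B -> 0 <= A -> 0 <= B -> T <= (A+B)/2 /\ -T <= (A+B)/2.
Proof.
  intros H HA HB. split.
  - replace ((A+B)/2) with (/2*A + /2*B) by field. apply (amgm T A B 1); try lra.
  - replace ((A+B)/2) with (/2*A + /2*B) by field. apply (amgm (-T) A B 1); try lra.

Qed.

Lemma sc a s T Z : 0 <= a -> a <= s -> T <= Z -> 0 <= Z -> a*T <= s*Z.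
Proof. intros. apply Rle_trans with (a*Z). apply Rmult_le_compat_l; lra. apply Rmult_le_compat_r; lra. Qed.

Ltac pos := repeat (first [lra | apply Rmult_le_pos | apply pow_le]).

Lemma scal g b m K N U EE BB ku2 P Q Y S kB2 kE2 :
  0 < g -> 0 < b -> 0 < m -> 0 <= K -> 0 <= N -> 0 <= U -> 0 <= EE -> 0 <= BB ->
  0 <= ku2 -> ku2 <= K*U -> P^2 <= N*ku2 -> Q^2 <= U*EE -> Y^2 <= U*kB2 -> S^2 <= EE*kB2 ->
  kB2 = K*BB -> 0 <= kE2 -> kE2 <= K*EE ->
  /4*(N+U+EE+BB) <= /2*(N+U+EE+BB) + a1c g b m * W1 K * P + a2c g b m * W2 K * Q + a3c g b m * W3 K * S /\
  /2*(N+U+EE+BB) + a1c g b m * W1 K * P + a2c g b m * W2 K * Q + a3c g b m * W3 K * S <= 1*(N+U+EE+BB) /\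
  (-(m*K*U) + a1c g b m * W1 K * (-(g*K+b^2/g)*N + g*ku2 - m*K*P)
     + a2c g b m * W2 K * (-b*EE - b*N + b*U - m*K*Q + Y) + a3c g b m * W3 K * (-kB2 + kE2 - b*Y))
   + cc g b m * N + cc g b m * K * U + cc g b m * (K/(1+K)^2) * EE + cc g b m * (K^2/(1+K)^3) * BB <= 0 /\
  (-(m*K*U) + a1c g b m * W1 K * (-(g*K+b^2/g)*N + g*ku2 - m*K*P)
     + a2c g b m * W2 K * (-b*EE - b*N + b*U - m*K*Q + Y) + a3c g b m * W3 K * (-kB2 + kE2 - b*Y))
   + cc g b m * (K^2/(1+K)^3) *
     (/2*(N+U+EE+BB) + a1c g b m * W1 K * P + a2c g b m * W2 K * Q + a3c g b m * W3 K * S) <= 0.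
Proof.
  intros Hg Hb Hm HK HN HU HE HB Hku Hku2 HP HQ HY HS HkB HkE HkE2.
  pose proof (consts g b m Hg Hb Hm) as HC. cbv zeta in HC.
  destruct HC as [A1p [A1g [A1m [A18 [A2p [A2b [A2m [A2mb [A2m2 [A28 [A3p [A3a [A3b [A38 [A3e
    [Cp [C1 [C2 [C3 C4]]]]]]]]]]]]]]]]]]].
  destruct (m0_facts g b Hg Hb) as [Hm0 [Hm1 Hm2]].
  set (a1 := a1c g b m) in *. set (a2 := a2c g b m) in *. set (a3 := a3c g b m) in *.
  set (c := cc g b m) in *. set (m' := m0 g b) in *.
  assert (H1K : 0 < 1+K) by lra.
  set (v := /(1+K)).
  assert (Hv : 0 < v) by (apply Rinv_0_lt_compat; lra).
  assert (HKv : K*v = 1 - v) by (unfold v; field; lra).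
  assert (Hv1 : v <= 1) by nra.
  assert (HvK : 0 <= v*K <= 1) by nra.
  assert (EW1 : W1 K = v) by reflexivity.
  assert (EW2 : W2 K = K*v^2) by (unfold W2, v; field; lra).
  assert (EW3 : W3 K = K*v^3) by (unfold W3, v; field; lra).
  assert (EW2' : K/(1+K)^2 = K*v^2) by (unfold v; field; lra).
  assert (EW3' : K^2/(1+K)^3 = K^2*v^3) by (unfold v; field; lra).
  rewrite EW1, EW2, EW3, EW2', EW3'.
  assert (Hv2 : 0 <= v^2 <= 1) by (split; nra).
  assert (Hv3 : 0 <= v^3 <= 1) by (split; nra).
  assert (HKU : 0 <= K*U) by nra.
  assert (HKv2 : 0 <= K*v^2 <= 1) by (split; nra).
  assert (HK2v3 : 0 <= K^2*v^3) by nra.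
  assert (B1 : a1*v*(g*ku2) <= m/16*(K*U)).
  { assert (v*ku2 <= K*U) by nra.
    replace (a1*v*(g*ku2)) with ((a1*g)*(v*ku2)) by ring.
    apply Rle_trans with ((a1*g)*(K*U)). apply Rmult_le_compat_l; nra.
    apply Rmult_le_compat_r; lra. }
  assert (B2 : a1*v*(-(m*K*P)) <= a1*m'/4*N + m/16*(K*U)).
  { apply (amgm _ N (K*U) ((a1*m)^2)); [| lra | lra | unfold Rdiv; apply Rmult_le_pos; [apply Rmult_le_pos|]; lra | lra |].
    2:{ replace (4*(a1*m'/4)*(m/16)) with ((a1*m)*(m'/16)) by field.
        replace ((a1*m)^2) with ((a1*m)*(a1*m)) by ring.
        apply Rmult_le_compat_l; [apply Rmult_le_pos|]; lra. }
    assert (hvk2 : (v*K)^2 <= 1) by nra.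
    assert (h1 : (v*K)^2*ku2 <= K*U).
    { apply Rle_trans with (1*ku2); [apply Rmult_le_compat_r; lra| lra]. }
    assert (h2 : (v*K)^2*P^2 <= (v*K)^2*(N*ku2)) by (apply Rmult_le_compat_l; nra).
    assert (h3 : N*((v*K)^2*ku2) <= N*(K*U)) by (apply Rmult_le_compat_l; nra).
    replace ((a1*v*(-(m*K*P)))^2) with ((a1*m)^2*((v*K)^2*P^2)) by ring.
    apply Rmult_le_compat_l; [nra|]. nra. }
  assert (B2b : a1*v*(-(g*K+b^2/g)*N) <= -(a1*m'*N)).
  { assert (h : m' <= v*(g*K+b^2/g)).
    { replace (v*(g*K+b^2/g)) with (g*(K*v) + b^2/g*v) by ring. rewrite HKv. nra. }
    assert (a1*N*m' <= a1*N*(v*(g*K+b^2/g))) by (apply Rmult_le_compat_l; nra).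
    nra. }
  assert (B3 : a2*(K*v^2)*(b*U) <= m/16*(K*U)).
  { assert (K*v^2*U <= K*U) by nra.
    replace (a2*(K*v^2)*(b*U)) with ((a2*b)*(K*v^2*U)) by ring.
    apply Rle_trans with ((a2*b)*(K*U)). apply Rmult_le_compat_l; nra.
    apply Rmult_le_compat_r; lra. }
  assert (B4 : a2*(K*v^2)*(-(m*K*Q)) <= a2*b/4*(K*v^2*EE) + m/16*(K*U)).
  { assert (hp : 0 <= a2*b/4) by (unfold Rdiv; repeat apply Rmult_le_pos; lra).
    assert (hA : 0 <= K*v^2*EE) by (apply Rmult_le_pos; lra).
    assert (hr : (a2*m)^2 <= 4*(a2*b/4)*(m/16)).
    { replace (4*(a2*b/4)*(m/16)) with ((a2*m)*(b/16)) by field.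
      replace ((a2*m)^2) with ((a2*m)*(a2*m)) by ring.
      apply Rmult_le_compat_l; [apply Rmult_le_pos|]; lra. }
    apply (amgm _ (K*v^2*EE) (K*U) ((a2*m)^2)); [| lra | lra | lra | lra | exact hr].
    replace ((a2*(K*v^2)*(-(m*K*Q)))^2) with ((a2*m)^2*((K^2*v^2)^2*Q^2)) by ring.
    apply Rmult_le_compat_l; [apply pow2_ge_0|].
    assert (hvk2 : (v*K)^2 <= 1) by nra.
    assert (h0 : 0 <= (K*v^2)*K) by (apply Rmult_le_pos; lra).
    assert (h1 : (K^2*v^2)^2 <= (K*v^2)*K).
    { replace ((K^2*v^2)^2) with ((K*v^2)*K*((v*K)^2)) by ring.
      apply Rle_trans with ((K*v^2)*K*1); [apply Rmult_le_compat_l; lra| lra]. }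
    assert (h2 : (K^2*v^2)^2*Q^2 <= (K^2*v^2)^2*(U*EE)) by (apply Rmult_le_compat_l; [apply pow2_ge_0|lra]).
    assert (h3 : (K^2*v^2)^2*(U*EE) <= (K*v^2)*K*(U*EE)) by (apply Rmult_le_compat_r; [apply Rmult_le_pos|]; lra).
    replace (K * v ^ 2 * EE * (K * U)) with ((K*v^2)*K*(U*EE)) by ring. lra. }
  assert (B5 : a2*(K*v^2)*Y <= a3/4*(K^2*v^3*BB) + m/16*(K*U)).
  { assert (hA : 0 <= K^2*v^3*BB) by (apply Rmult_le_pos; lra).
    apply (amgm _ (K^2*v^3*BB) (K*U) (a2^2)); [| lra | lra | lra | lra | lra].
    replace ((a2*(K*v^2)*Y)^2) with (a2^2*((K*v^2)^2*Y^2)) by ring.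
    apply Rmult_le_compat_l; [apply pow2_ge_0|].
    assert (h2 : (K*v^2)^2*Y^2 <= (K*v^2)^2*(U*(K*BB))) by (rewrite <- HkB; apply Rmult_le_compat_l; [apply pow2_ge_0|lra]).
    assert (h3 : (K*v^2)^2*(U*(K*BB)) <= K^2*v^3*BB*(K*U)).
    { replace ((K*v^2)^2*(U*(K*BB))) with (v*(K^2*v^3*BB*(K*U))) by ring.
      assert (0 <= K^2*v^3*BB*(K*U)) by (apply Rmult_le_pos; lra).
      apply Rle_trans with (1*(K^2*v^3*BB*(K*U))); [apply Rmult_le_compat_r; lra|lra]. }
    lra. }
  assert (B6 : a3*(K*v^3)*kE2 <= a2*b/4*(K*v^2*EE)).
  { assert (h1 : a3*(K*v^3)*kE2 <= a3*(K*v^3)*(K*EE)) by (apply Rmult_le_compat_l; [pos|lra]).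
    assert (h2 : a3*(K*v^3)*(K*EE) = (v*K)*(a3*(K*v^2*EE))) by ring.
    assert (h3 : (v*K)*(a3*(K*v^2*EE)) <= 1*(a3*(K*v^2*EE))) by (apply Rmult_le_compat_r; [pos|lra]).
    assert (h4 : a3*(K*v^2*EE) <= a2*b/4*(K*v^2*EE)) by (apply Rmult_le_compat_r; [pos|lra]).
    lra. }
  assert (B7 : a3*(K*v^3)*(-(b*Y)) <= a3/4*(K^2*v^3*BB) + m/16*(K*U)).
  { assert (hA : 0 <= K^2*v^3*BB) by (apply Rmult_le_pos; lra).
    assert (hr : (a3*b)^2 <= 4*(a3/4)*(m/16)).
    { replace (4*(a3/4)*(m/16)) with (a3*(m/16)) by field.
      replace ((a3*b)^2) with (a3*(a3*b^2)) by ring.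
      apply Rmult_le_compat_l; lra. }
    apply (amgm _ (K^2*v^3*BB) (K*U) ((a3*b)^2)); [| lra | lra | lra | lra | exact hr].
    replace ((a3*(K*v^3)*(-(b*Y)))^2) with ((a3*b)^2*((K*v^3)^2*Y^2)) by ring.
    apply Rmult_le_compat_l; [apply pow2_ge_0|].
    assert (h2 : (K*v^3)^2*Y^2 <= (K*v^3)^2*(U*(K*BB))) by (rewrite <- HkB; apply Rmult_le_compat_l; [apply pow2_ge_0|lra]).
    assert (h3 : (K*v^3)^2*(U*(K*BB)) <= K^2*v^3*BB*(K*U)).
    { replace ((K*v^3)^2*(U*(K*BB))) with (v^3*(K^2*v^3*BB*(K*U))) by ring.
      assert (0 <= K^2*v^3*BB*(K*U)) by (apply Rmult_le_pos; lra).
      apply Rle_trans with (1*(K^2*v^3*BB*(K*U))); [apply Rmult_le_compat_r; lra|lra]. }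
    lra. }
  assert (B8 : a2*(K*v^2)*(b*N) >= 0) by (apply Rle_ge; pos).
  assert (Hdv : -(m*K*U) + a1 * v * (-(g*K+b^2/g)*N + g*ku2 - m*K*P)
     + a2 * (K*v^2) * (-b*EE - b*N + b*U - m*K*Q + Y) + a3 * (K*v^3) * (-kB2 + kE2 - b*Y)
     <= -(10/16)*m*(K*U) - 3/4*(a1*m'*N) - a2*b/2*(K*v^2*EE) - a3/2*(K^2*v^3*BB)).
  { rewrite HkB. lra. }
  assert (D1 : c*N <= a1*m'/2*N) by (apply Rmult_le_compat_r; lra).
  assert (D2 : c*(K*U) <= m/2*(K*U)) by (apply Rmult_le_compat_r; lra).
  assert (D3 : c*(K*v^2*EE) <= a2*b/2*(K*v^2*EE)) by (apply Rmult_le_compat_r; [pos|lra]).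
  assert (D4 : c*(K^2*v^3*BB) <= a3/2*(K^2*v^3*BB)) by (apply Rmult_le_compat_r; [pos|lra]).
  assert (Z1 : 0 <= a1*m'*N) by pos.
  assert (Z2 : 0 <= m*(K*U)) by pos.
  assert (G3 : -(m*K*U) + a1 * v * (-(g*K+b^2/g)*N + g*ku2 - m*K*P)
     + a2 * (K*v^2) * (-b*EE - b*N + b*U - m*K*Q + Y) + a3 * (K*v^3) * (-kB2 + kE2 - b*Y)
     + c*N + c*K*U + c*(K*v^2)*EE + c*(K^2*v^3)*BB <= 0) by lra.
  assert (hvk2 : (v*K)^2 <= 1) by nra.
  assert (E1 : v*P <= (N+U)/2 /\ -(v*P) <= (N+U)/2).
  { apply amgm_abs; [|lra|lra].
    assert (h0 : v^2*ku2 <= U).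
    { assert (h : v^2*ku2 <= v^2*(K*U)) by (apply Rmult_le_compat_l; pos).
      replace (v^2*(K*U)) with (v*((v*K)*U)) in h by ring.
      assert (0 <= (v*K)*U) by pos.
      assert (v*((v*K)*U) <= 1*((v*K)*U)) by (apply Rmult_le_compat_r; lra).
      assert ((v*K)*U <= 1*U) by (apply Rmult_le_compat_r; lra). lra. }
    replace ((v*P)^2) with (v^2*P^2) by ring.
    assert (v^2*P^2 <= v^2*(N*ku2)) by (apply Rmult_le_compat_l; pos).
    assert (N*(v^2*ku2) <= N*U) by (apply Rmult_le_compat_l; pos).
    replace (v^2*(N*ku2)) with (N*(v^2*ku2)) in H by ring. lra. }
  assert (E2 : K*v^2*Q <= (U+EE)/2 /\ -(K*v^2*Q) <= (U+EE)/2).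
  { apply amgm_abs; [|lra|lra].
    replace ((K*v^2*Q)^2) with ((K*v^2)^2*Q^2) by ring.
    assert ((K*v^2)^2*Q^2 <= (K*v^2)^2*(U*EE)) by (apply Rmult_le_compat_l; pos).
    assert ((K*v^2)^2 <= 1) by (replace ((K*v^2)^2) with ((K*v^2)*(K*v^2)) by ring;
       apply Rle_trans with (1*(K*v^2)); [apply Rmult_le_compat_r|]; lra).
    assert (0 <= U*EE) by pos.
    assert ((K*v^2)^2*(U*EE) <= 1*(U*EE)) by (apply Rmult_le_compat_r; lra). lra. }
  assert (E3 : K*v^3*S <= (EE+BB)/2 /\ -(K*v^3*S) <= (EE+BB)/2).
  { apply amgm_abs; [|lra|lra].
    replace ((K*v^3*S)^2) with ((K*v^3)^2*S^2) by ring.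
    assert (H : (K*v^3)^2*S^2 <= (K*v^3)^2*(EE*(K*BB))) by (rewrite <- HkB; apply Rmult_le_compat_l; pos).
    replace ((K*v^3)^2*(EE*(K*BB))) with (((v*K)^3*v^3)*(EE*BB)) in H by ring.
    assert (h1 : (v*K)^3 <= 1) by (replace ((v*K)^3) with ((v*K)^2*(v*K)) by ring;
       apply Rle_trans with (1*(v*K)); [apply Rmult_le_compat_r|]; lra).
    assert (h2 : (v*K)^3*v^3 <= 1) by (apply Rle_trans with (1*v^3); [apply Rmult_le_compat_r|]; lra).
    assert (0 <= EE*BB) by pos.
    assert (((v*K)^3*v^3)*(EE*BB) <= 1*(EE*BB)) by (apply Rmult_le_compat_r; lra). lra. }
  destruct E1 as [E1a E1b]. destruct E2 as [E2a E2b]. destruct E3 as [E3a E3b].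
  assert (F1 : a1*(v*P) <= /8*((N+U)/2)) by (apply sc; lra).
  assert (F1' : a1*(-(v*P)) <= /8*((N+U)/2)) by (apply sc; lra).
  assert (F2 : a2*(K*v^2*Q) <= /8*((U+EE)/2)) by (apply sc; lra).
  assert (F2' : a2*(-(K*v^2*Q)) <= /8*((U+EE)/2)) by (apply sc; lra).
  assert (F3 : a3*(K*v^3*S) <= /8*((EE+BB)/2)) by (apply sc; lra).
  assert (F3' : a3*(-(K*v^3*S)) <= /8*((EE+BB)/2)) by (apply sc; lra).
  assert (G1 : /4*(N+U+EE+BB) <= /2*(N+U+EE+BB) + a1 * v * P + a2 * (K*v^2) * Q + a3 * (K*v^3) * S) by lra.
  assert (G2 : /2*(N+U+EE+BB) + a1 * v * P + a2 * (K*v^2) * Q + a3 * (K*v^3) * S <= 1*(N+U+EE+BB)) by lra.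
  split; [exact G1|split; [exact G2|split; [exact G3|]]].
  assert (w1 : K^2*v^3 <= 1).
  { replace (K^2*v^3) with ((v*K)^2*v) by ring.
    apply Rle_trans with (1*v); [apply Rmult_le_compat_r|]; lra. }
  assert (w2 : K^2*v^3 <= K).
  { replace (K^2*v^3) with (((v*K)*v^2)*K) by ring.
    assert ((v*K)*v^2 <= 1) by (apply Rle_trans with (1*v^2); [apply Rmult_le_compat_r|]; lra).
    apply Rle_trans with (1*K); [apply Rmult_le_compat_r|]; lra. }
  assert (w3 : K^2*v^3 <= K*v^2).
  { replace (K^2*v^3) with ((v*K)*(K*v^2)) by ring.
    apply Rle_trans with (1*(K*v^2)); [apply Rmult_le_compat_r|]; lra. }
  assert (cK : 0 <= c*(K^2*v^3)) by pos.
  assert (c*(K^2*v^3)*(/2*(N+U+EE+BB) + a1 * v * P + a2 * (K*v^2) * Q + a3 * (K*v^3) * S)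
          <= c*(K^2*v^3)*(1*(N+U+EE+BB))) by (apply Rmult_le_compat_l; lra).
  assert (c*(K^2*v^3)*N <= c*1*N) by (apply Rmult_le_compat_r; [lra|apply Rmult_le_compat_l; lra]).
  assert (c*(K^2*v^3)*U <= c*K*U) by (apply Rmult_le_compat_r; [lra|apply Rmult_le_compat_l; lra]).
  assert (c*(K^2*v^3)*EE <= c*(K*v^2)*EE) by (apply Rmult_le_compat_r; [lra|apply Rmult_le_compat_l; lra]).
  lra.
Qed.
Lemma CS6 a1 a2 a3 a4 a5 a6 b1 b2 b3 b4 b5 b6 L R1 R2 :
  L = a1*b1+a2*b2+a3*b3+a4*b4+a5*b5+a6*b6 ->
  R1 = a1^2+a2^2+a3^2+a4^2+a5^2+a6^2 -> R2 = b1^2+b2^2+b3^2+b4^2+b5^2+b6^2 -> L^2 <= R1*R2.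
Proof.
  intros -> -> ->.
  assert (E : (a1^2+a2^2+a3^2+a4^2+a5^2+a6^2)*(b1^2+b2^2+b3^2+b4^2+b5^2+b6^2) - (a1*b1+a2*b2+a3*b3+a4*b4+a5*b5+a6*b6)^2 = (a1*b2-a2*b1)^2+(a1*b3-a3*b1)^2+(a1*b4-a4*b1)^2+(a1*b5-a5*b1)^2+(a1*b6-a6*b1)^2+(a2*b3-a3*b2)^2+(a2*b4-a4*b2)^2+(a2*b5-a5*b2)^2+(a2*b6-a6*b2)^2+(a3*b4-a4*b3)^2+(a3*b5-a5*b3)^2+(a3*b6-a6*b3)^2+(a4*b5-a5*b4)^2+(a4*b6-a6*b4)^2+(a5*b6-a6*b5)^2) by ring.
  assert (0 <= (a1*b2-a2*b1)^2+(a1*b3-a3*b1)^2+(a1*b4-a4*b1)^2+(a1*b5-a5*b1)^2+(a1*b6-a6*b1)^2+(a2*b3-a3*b2)^2+(a2*b4-a4*b2)^2+(a2*b5-a5*b2)^2+(a2*b6-a6*b2)^2+(a3*b4-a4*b3)^2+(a3*b5-a5*b3)^2+(a3*b6-a6*b3)^2+(a4*b5-a5*b4)^2+(a4*b6-a6*b4)^2+(a5*b6-a6*b5)^2) by (repeat apply Rplus_le_le_0_compat; apply pow2_ge_0).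
  lra.
Qed.

Lemma pure g b m k1 k2 k3 nr ni x1 y1 x2 y2 x3 y3 e1 f1 e2 f2 e3 f3 g1 h1 g2 h2 g3 h3 :
  0 < g -> 0 < b -> 0 < m ->
  b/g*nr = (k1*f1+k2*f2+k3*f3) -> b/g*ni = -(k1*e1+k2*e2+k3*e3) -> (k1*g1+k2*g2+k3*g3) = 0 -> (k1*h1+k2*h2+k3*h3) = 0 ->
  /4*((nr^2+ni^2)+(x1^2+y1^2 + (x2^2+y2^2) + (x3^2+y3^2))+(e1^2+f1^2 + (e2^2+f2^2) + (e3^2+f3^2))+(g1^2+h1^2 + (g2^2+h2^2) + (g3^2+h3^2))) <= Ef (a1c g b m * W1 (k1*k1+k2*k2+k3*k3)) (a2c g b m * W2 (k1*k1+k2*k2+k3*k3)) (a3c g b m * W3 (k1*k1+k2*k2+k3*k3)) k1 k2 k3 nr ni x1 y1 x2 y2 x3 y3 e1 f1 e2 f2 e3 f3 g1 h1 g2 h2 g3 h3 /\ Ef (a1c g b m * W1 (k1*k1+k2*k2+k3*k3)) (a2c g b m * W2 (k1*k1+k2*k2+k3*k3)) (a3c g b m * W3 (k1*k1+k2*k2+k3*k3)) k1 k2 k3 nr ni x1 y1 x2 y2 x3 y3 e1 f1 e2 f2 e3 f3 g1 h1 g2 h2 g3 h3 <= 1*((nr^2+ni^2)+(x1^2+y1^2 + (x2^2+y2^2) + (x3^2+y3^2))+(e1^2+f1^2 + (e2^2+f2^2) + (e3^2+f3^2))+(g1^2+h1^2 + (g2^2+h2^2) + (g3^2+h3^2)))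 /\
  dvgen (a1c g b m * W1 (k1*k1+k2*k2+k3*k3)) (a2c g b m * W2 (k1*k1+k2*k2+k3*k3)) (a3c g b m * W3 (k1*k1+k2*k2+k3*k3)) g b m k1 k2 k3 nr ni x1 y1 x2 y2 x3 y3 e1 f1 e2 f2 e3 f3 g1 h1 g2 h2 g3 h3 + cc g b m * (nr^2+ni^2) + cc g b m * (k1*k1+k2*k2+k3*k3) * (x1^2+y1^2 + (x2^2+y2^2) + (x3^2+y3^2)) + cc g b m * ((k1*k1+k2*k2+k3*k3)/(1+(k1*k1+k2*k2+k3*k3))^2) * (e1^2+f1^2 + (e2^2+f2^2) + (e3^2+f3^2)) + cc g b m * ((k1*k1+k2*k2+k3*k3)^2/(1+(k1*k1+k2*k2+k3*k3))^3) * (g1^2+h1^2 + (g2^2+h2^2) + (g3^2+h3^2)) <= 0 /\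
  dvgen (a1c g b m * W1 (k1*k1+k2*k2+k3*k3)) (a2c g b m * W2 (k1*k1+k2*k2+k3*k3)) (a3c g b m * W3 (k1*k1+k2*k2+k3*k3)) g b m k1 k2 k3 nr ni x1 y1 x2 y2 x3 y3 e1 f1 e2 f2 e3 f3 g1 h1 g2 h2 g3 h3 + cc g b m * ((k1*k1+k2*k2+k3*k3)^2/(1+(k1*k1+k2*k2+k3*k3))^3) * (Ef (a1c g b m * W1 (k1*k1+k2*k2+k3*k3)) (a2c g b m * W2 (k1*k1+k2*k2+k3*k3)) (a3c g b m * W3 (k1*k1+k2*k2+k3*k3)) k1 k2 k3 nr ni x1 y1 x2 y2 x3 y3 e1 f1 e2 f2 e3 f3 g1 h1 g2 h2 g3 h3) <= 0.
Proof.
  intros Hg Hb Hm Hnr0 Hni0 Hkg Hkh.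
  assert (Hnr : nr = g/b*(k1*f1+k2*f2+k3*f3)) by (rewrite <- Hnr0; field; lra).
  assert (Hni : ni = -(g/b)*(k1*e1+k2*e2+k3*e3)) by (replace (-(g/b)*(k1*e1+k2*e2+k3*e3)) with (g/b*(-(k1*e1+k2*e2+k3*e3))) by ring; rewrite <- Hni0; field; lra).
  rewrite (ident _ _ _ g b m k1 k2 k3 nr ni x1 y1 x2 y2 x3 y3 e1 f1 e2 f2 e3 f3 g1 h1 g2 h2 g3 h3) by (auto; lra).
  replace (Ef (a1c g b m * W1 (k1*k1+k2*k2+k3*k3)) (a2c g b m * W2 (k1*k1+k2*k2+k3*k3)) (a3c g b m * W3 (k1*k1+k2*k2+k3*k3)) k1 k2 k3 nr ni x1 y1 x2 y2 x3 y3 e1 f1 e2 f2 e3 f3 g1 h1 g2 h2 g3 h3) with (/2*((nr^2+ni^2)+(x1^2+y1^2 + (x2^2+y2^2) + (x3^2+y3^2))+(e1^2+f1^2 + (e2^2+f2^2) + (e3^2+f3^2))+(g1^2+h1^2 + (g2^2+h2^2) + (g3^2+h3^2))) + (a1c g b m * W1 (k1*k1+k2*k2+k3*k3)) * ((k1*y1+k2*y2+k3*y3)*nr - (k1*x1+k2*x2+k3*x3)*ni) + (a2c g b m * W2 (k1*k1+k2*k2+k3*k3)) * (x1*e1+y1*f1+x2*e2+y2*f2+x3*e3+y3*f3) + (a3c g b m * W3 (k1*k1+k2*k2+k3*k3)) * (e1*(k2*h3-k3*h2)+e2*(k3*h1-k1*h3)+e3*(k1*h2-k2*h1) - (f1*(k2*g3-k3*g2)+f2*(k3*g1-k1*g3)+f3*(k1*g2-k2*g1))))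 by (unfold Ef; ring).
  apply (scal g b m (k1*k1+k2*k2+k3*k3) (nr^2+ni^2) (x1^2+y1^2 + (x2^2+y2^2) + (x3^2+y3^2)) (e1^2+f1^2 + (e2^2+f2^2) + (e3^2+f3^2)) (g1^2+h1^2 + (g2^2+h2^2) + (g3^2+h3^2)) ((k1*x1+k2*x2+k3*x3)^2+(k1*y1+k2*y2+k3*y3)^2) ((k1*y1+k2*y2+k3*y3)*nr - (k1*x1+k2*x2+k3*x3)*ni) (x1*e1+y1*f1+x2*e2+y2*f2+x3*e3+y3*f3) (y1*(k2*g3-k3*g2)-x1*(k2*h3-k3*h2)+(y2*(k3*g1-k1*g3)-x2*(k3*h1-k1*h3))+(y3*(k1*g2-k2*g1)-x3*(k1*h2-k2*h1))) (e1*(k2*h3-k3*h2)+e2*(k3*h1-k1*h3)+e3*(k1*h2-k2*h1) - (f1*(k2*g3-k3*g2)+f2*(k3*g1-k1*g3)+f3*(k1*g2-k2*g1))) ((k2*g3-k3*g2)^2+(k3*g1-k1*g3)^2+(k1*g2-k2*g1)^2+(k2*h3-k3*h2)^2+(k3*h1-k1*h3)^2+(k1*h2-k2*h1)^2) ((k2*e3-k3*e2)^2+(k3*e1-k1*e3)^2+(k1*e2-k2*e1)^2+(k2*f3-k3*f2)^2+(k3*f1-k1*f3)^2+(k1*f2-k2*f1)^2)); auto.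
  - (repeat apply Rplus_le_le_0_compat; first [apply pow2_ge_0 | apply Rle_0_sqr]).
  - (repeat apply Rplus_le_le_0_compat; first [apply pow2_ge_0 | apply Rle_0_sqr]).
  - (repeat apply Rplus_le_le_0_compat; first [apply pow2_ge_0 | apply Rle_0_sqr]).
  - (repeat apply Rplus_le_le_0_compat; first [apply pow2_ge_0 | apply Rle_0_sqr]).
  - (repeat apply Rplus_le_le_0_compat; first [apply pow2_ge_0 | apply Rle_0_sqr]).
  - (repeat apply Rplus_le_le_0_compat; first [apply pow2_ge_0 | apply Rle_0_sqr]).
  - assert (E : (k1*k1+k2*k2+k3*k3)*(x1^2+y1^2 + (x2^2+y2^2) + (x3^2+y3^2)) - ((k1*x1+k2*x2+k3*x3)^2+(k1*y1+k2*y2+k3*y3)^2) = (k1*x2-k2*x1)^2+(k1*x3-k3*x1)^2+(k2*x3-k3*x2)^2+(k1*y2-k2*y1)^2+(k1*y3-k3*y1)^2+(k2*y3-k3*y2)^2) by ring.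
    assert (0 <= (k1*x2-k2*x1)^2+(k1*x3-k3*x1)^2+(k2*x3-k3*x2)^2+(k1*y2-k2*y1)^2+(k1*y3-k3*y1)^2+(k2*y3-k3*y2)^2) by (repeat apply Rplus_le_le_0_compat; first [apply pow2_ge_0 | apply Rle_0_sqr]). lra.
  - assert (E : (nr^2+ni^2)*((k1*x1+k2*x2+k3*x3)^2+(k1*y1+k2*y2+k3*y3)^2) - ((k1*y1+k2*y2+k3*y3)*nr - (k1*x1+k2*x2+k3*x3)*ni)^2 = ((k1*x1+k2*x2+k3*x3)*nr+(k1*y1+k2*y2+k3*y3)*ni)^2) by ring.
    pose proof (pow2_ge_0 ((k1*x1+k2*x2+k3*x3)*nr+(k1*y1+k2*y2+k3*y3)*ni)). lra.
  - apply (CS6 x1 y1 x2 y2 x3 y3 e1 f1 e2 f2 e3 f3); ring.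
  - apply (CS6 y1 (-x1) y2 (-x2) y3 (-x3) (k2*g3-k3*g2) (k2*h3-k3*h2) (k3*g1-k1*g3) (k3*h1-k1*h3) (k1*g2-k2*g1) (k1*h2-k2*h1)); ring.
  - apply (CS6 e1 (-f1) e2 (-f2) e3 (-f3) (k2*h3-k3*h2) (k2*g3-k3*g2) (k3*h1-k1*h3) (k3*g1-k1*g3) (k1*h2-k2*h1) (k1*g2-k2*g1)); ring.
  - assert (E : ((k2*g3-k3*g2)^2+(k3*g1-k1*g3)^2+(k1*g2-k2*g1)^2+(k2*h3-k3*h2)^2+(k3*h1-k1*h3)^2+(k1*h2-k2*h1)^2) + (k1*g1+k2*g2+k3*g3)^2 + (k1*h1+k2*h2+k3*h3)^2 = (k1*k1+k2*k2+k3*k3)*(g1^2+h1^2 + (g2^2+h2^2) + (g3^2+h3^2))) by ring.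
    rewrite Hkg, Hkh in E. lra.
  - (repeat apply Rplus_le_le_0_compat; first [apply pow2_ge_0 | apply Rle_0_sqr]).
  - assert (E : ((k2*e3-k3*e2)^2+(k3*e1-k1*e3)^2+(k1*e2-k2*e1)^2+(k2*f3-k3*f2)^2+(k3*f1-k1*f3)^2+(k1*f2-k2*f1)^2) + (k1*e1+k2*e2+k3*e3)^2 + (k1*f1+k2*f2+k3*f3)^2 = (k1*k1+k2*k2+k3*k3)*(e1^2+f1^2 + (e2^2+f2^2) + (e3^2+f3^2))) by ring.
    pose proof (pow2_ge_0 (k1*e1+k2*e2+k3*e3)). pose proof (pow2_ge_0 (k1*f1+k2*f2+k3*f3)). lra.
Qed.

Lemma deq (f : R -> R) (t l l' : R) : is_derive f t l -> l = l' -> is_derive f t l'.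
Proof. intros H ->. exact H. Qed.

Lemma Cmod_sq z : Cmod z ^ 2 = fst z ^ 2 + snd z ^ 2.
Proof. unfold Cmod. rewrite pow2_sqrt; [ring|]. pose proof (pow2_ge_0 (fst z)); pose proof (pow2_ge_0 (snd z)); lra. Qed.

Definition Ecal (gamma beta mu : R) (k : R3) (n : C) (u E B : C3) : R :=
  Ef (a1c gamma beta mu * W1 (normR3sq k)) (a2c gamma beta mu * W2 (normR3sq k)) (a3c gamma beta mu * W3 (normR3sq k))
     (r1 k) (r2 k) (r3 k) (fst n) (snd n) (fst (Defs.c1 u)) (snd (Defs.c1 u)) (fst (Defs.c2 u)) (snd (Defs.c2 u)) (fst (Defs.c3 u)) (snd (Defs.c3 u))
     (fst (Defs.c1 E)) (snd (Defs.c1 E)) (fst (Defs.c2 E)) (snd (Defs.c2 E)) (fst (Defs.c3 E)) (snd (Defs.c3 E))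
     (fst (Defs.c1 B)) (snd (Defs.c1 B)) (fst (Defs.c2 B)) (snd (Defs.c2 B)) (fst (Defs.c3 B)) (snd (Defs.c3 B)).

Theorem theorem2p1 (gamma beta mu : R) (Hg : 0 < gamma) (Hb : 0 < beta) (Hm : 0 < mu) :
  exists (Ecal : R3 -> C -> C3 -> C3 -> C3 -> R) (c clow cup : R),
    0 < c /\ 0 < clow /\ 0 < cup /\
    forall (k : R3) (n : R -> C) (u E B : R -> C3),
      fourier_solution gamma beta mu k n u E B ->
      forall t : R, 0 <= t ->
        clow * normUsq (n t) (u t) (E t) (B t) <= Ecal k (n t) (u t) (E t) (B t) /\
        Ecal k (n t) (u t) (E t) (B t) <= cup * normUsq (n t) (u t) (E t) (B t) /\
        exists d : R,
          is_derive (fun s => Ecal k (n s) (u s) (E s) (B s)) t d /\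
          d + c * normCsq (n t) + c * normR3sq k * normC3sq (u t)
            + c * (normR3sq k / (1 + normR3sq k) ^ 2) * normC3sq (E t)
            + c * (normR3sq k ^ 2 / (1 + normR3sq k) ^ 3) * normC3sq (B t) <= 0 /\
          d + c * (normR3sq k ^ 2 / (1 + normR3sq k) ^ 3)
                * Ecal k (n t) (u t) (E t) (B t) <= 0.
Proof.
  exists (Ecal gamma beta mu), (cc gamma beta mu), (/4), 1.
  pose proof (consts gamma beta mu Hg Hb Hm) as HC. cbv zeta in HC.
  split; [tauto|]. split; [lra|]. split; [lra|].
  intros k n u E B Hsol t Ht.
  destruct (Hsol t Ht) as [Hn [Hu [HE [HB [C1 C2]]]]].
  destruct Hn as [Hn1 Hn2]. destruct Hu as [[Hu1 Hu2] [[Hu3 Hu4] [Hu5 Hu6]]].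
  destruct HE as [[HE1 HE2] [[HE3 HE4] [HE5 HE6]]].
  destruct HB as [[HB1 HB2] [[HB3 HB4] [HB5 HB6]]].
  pose proof (f_equal fst C1) as C1a. pose proof (f_equal snd C1) as C1b.
  pose proof (f_equal fst C2) as C2a. pose proof (f_equal snd C2) as C2b.
  clear C1 C2 Hsol.
  unfold scalC3, addC3, C3ofR3, crossRC, dotRC, Cmult, Cplus, Copp, Cminus, RtoC, Ci, Re, Im, normR3sq
    in Hn1, Hn2, Hu1, Hu2, Hu3, Hu4, Hu5, Hu6, HE1, HE2, HE3, HE4, HE5, HE6, HB1, HB2, HB3, HB4, HB5, HB6, C1a, C1b, C2a, C2b.
  simpl in Hn1, Hn2, Hu1, Hu2, Hu3, Hu4, Hu5, Hu6, HE1, HE2, HE3, HE4, HE5, HE6, HB1, HB2, HB3, HB4, HB5, HB6, C1a, C1b, C2a, C2b.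
  assert (D_nr : is_derive (fun s => (fst (n s))) t (gamma*((r1 k)*(snd (Defs.c1 (u t)))+(r2 k)*(snd (Defs.c2 (u t)))+(r3 k)*(snd (Defs.c3 (u t)))))) by (eapply deq; [exact Hn1 | ring]).
  assert (D_ni : is_derive (fun s => (snd (n s))) t (-(gamma*((r1 k)*(fst (Defs.c1 (u t)))+(r2 k)*(fst (Defs.c2 (u t)))+(r3 k)*(fst (Defs.c3 (u t))))))) by (eapply deq; [exact Hn2 | ring]).
  assert (D_x1 : is_derive (fun s => (fst (Defs.c1 (u s)))) t (gamma*(r1 k)*(snd (n t))-beta*(fst (Defs.c1 (E t)))-mu*((r1 k)*(r1 k)+(r2 k)*(r2 k)+(r3 k)*(r3 k))*(fst (Defs.c1 (u t))))) by (eapply deq; [exact Hu1 | ring]).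
  assert (D_y1 : is_derive (fun s => (snd (Defs.c1 (u s)))) t (-(gamma*(r1 k)*(fst (n t)))-beta*(snd (Defs.c1 (E t)))-mu*((r1 k)*(r1 k)+(r2 k)*(r2 k)+(r3 k)*(r3 k))*(snd (Defs.c1 (u t))))) by (eapply deq; [exact Hu2 | ring]).
  assert (D_x2 : is_derive (fun s => (fst (Defs.c2 (u s)))) t (gamma*(r2 k)*(snd (n t))-beta*(fst (Defs.c2 (E t)))-mu*((r1 k)*(r1 k)+(r2 k)*(r2 k)+(r3 k)*(r3 k))*(fst (Defs.c2 (u t))))) by (eapply deq; [exact Hu3 | ring]).
  assert (D_y2 : is_derive (fun s => (snd (Defs.c2 (u s)))) t (-(gamma*(r2 k)*(fst (n t)))-beta*(snd (Defs.c2 (E t)))-mu*((r1 k)*(r1 k)+(r2 k)*(r2 k)+(r3 k)*(r3 k))*(snd (Defs.c2 (u t))))) by (eapply deq; [exact Hu4 | ring]).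
  assert (D_x3 : is_derive (fun s => (fst (Defs.c3 (u s)))) t (gamma*(r3 k)*(snd (n t))-beta*(fst (Defs.c3 (E t)))-mu*((r1 k)*(r1 k)+(r2 k)*(r2 k)+(r3 k)*(r3 k))*(fst (Defs.c3 (u t))))) by (eapply deq; [exact Hu5 | ring]).
  assert (D_y3 : is_derive (fun s => (snd (Defs.c3 (u s)))) t (-(gamma*(r3 k)*(fst (n t)))-beta*(snd (Defs.c3 (E t)))-mu*((r1 k)*(r1 k)+(r2 k)*(r2 k)+(r3 k)*(r3 k))*(snd (Defs.c3 (u t))))) by (eapply deq; [exact Hu6 | ring]).
  assert (D_e1 : is_derive (fun s => (fst (Defs.c1 (E s)))) t (-((r2 k)*(snd (Defs.c3 (B t)))-(r3 k)*(snd (Defs.c2 (B t))))+beta*(fst (Defs.c1 (u t))))) by (eapply deq; [exact HE1 | ring]).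
  assert (D_f1 : is_derive (fun s => (snd (Defs.c1 (E s)))) t (((r2 k)*(fst (Defs.c3 (B t)))-(r3 k)*(fst (Defs.c2 (B t))))+beta*(snd (Defs.c1 (u t))))) by (eapply deq; [exact HE2 | ring]).
  assert (D_e2 : is_derive (fun s => (fst (Defs.c2 (E s)))) t (-((r3 k)*(snd (Defs.c1 (B t)))-(r1 k)*(snd (Defs.c3 (B t))))+beta*(fst (Defs.c2 (u t))))) by (eapply deq; [exact HE3 | ring]).
  assert (D_f2 : is_derive (fun s => (snd (Defs.c2 (E s)))) t (((r3 k)*(fst (Defs.c1 (B t)))-(r1 k)*(fst (Defs.c3 (B t))))+beta*(snd (Defs.c2 (u t))))) by (eapply deq; [exact HE4 | ring]).
  assert (D_e3 : is_derive (fun s => (fst (Defs.c3 (E s)))) t (-((r1 k)*(snd (Defs.c2 (B t)))-(r2 k)*(snd (Defs.c1 (B t))))+beta*(fst (Defs.c3 (u t))))) by (eapply deq; [exact HE5 | ring]).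
  assert (D_f3 : is_derive (fun s => (snd (Defs.c3 (E s)))) t (((r1 k)*(fst (Defs.c2 (B t)))-(r2 k)*(fst (Defs.c1 (B t))))+beta*(snd (Defs.c3 (u t))))) by (eapply deq; [exact HE6 | ring]).
  assert (D_g1 : is_derive (fun s => (fst (Defs.c1 (B s)))) t (((r2 k)*(snd (Defs.c3 (E t)))-(r3 k)*(snd (Defs.c2 (E t)))))) by (eapply deq; [exact HB1 | ring]).
  assert (D_h1 : is_derive (fun s => (snd (Defs.c1 (B s)))) t (-((r2 k)*(fst (Defs.c3 (E t)))-(r3 k)*(fst (Defs.c2 (E t)))))) by (eapply deq; [exact HB2 | ring]).
  assert (D_g2 : is_derive (fun s => (fst (Defs.c2 (B s)))) t (((r3 k)*(snd (Defs.c1 (E t)))-(r1 k)*(snd (Defs.c3 (E t)))))) by (eapply deq; [exact HB3 | ring]).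
  assert (D_h2 : is_derive (fun s => (snd (Defs.c2 (B s)))) t (-((r3 k)*(fst (Defs.c1 (E t)))-(r1 k)*(fst (Defs.c3 (E t)))))) by (eapply deq; [exact HB4 | ring]).
  assert (D_g3 : is_derive (fun s => (fst (Defs.c3 (B s)))) t (((r1 k)*(snd (Defs.c2 (E t)))-(r2 k)*(snd (Defs.c1 (E t)))))) by (eapply deq; [exact HB5 | ring]).
  assert (D_h3 : is_derive (fun s => (snd (Defs.c3 (B s)))) t (-((r1 k)*(fst (Defs.c2 (E t)))-(r2 k)*(fst (Defs.c1 (E t)))))) by (eapply deq; [exact HB6 | ring]).
  assert (K1 : beta/gamma * fst (n t) = ((r1 k)*(snd (Defs.c1 (E t)))+(r2 k)*(snd (Defs.c2 (E t)))+(r3 k)*(snd (Defs.c3 (E t))))) by lra.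
  assert (K2 : beta/gamma * snd (n t) = -((r1 k)*(fst (Defs.c1 (E t)))+(r2 k)*(fst (Defs.c2 (E t)))+(r3 k)*(fst (Defs.c3 (E t))))) by lra.
  assert (K3 : ((r1 k)*(fst (Defs.c1 (B t)))+(r2 k)*(fst (Defs.c2 (B t)))+(r3 k)*(fst (Defs.c3 (B t)))) = 0) by lra.
  assert (K4 : ((r1 k)*(snd (Defs.c1 (B t)))+(r2 k)*(snd (Defs.c2 (B t)))+(r3 k)*(snd (Defs.c3 (B t)))) = 0) by lra.
  destruct (pure gamma beta mu (r1 k) (r2 k) (r3 k) (fst (n t)) (snd (n t)) (fst (Defs.c1 (u t))) (snd (Defs.c1 (u t))) (fst (Defs.c2 (u t))) (snd (Defs.c2 (u t))) (fst (Defs.c3 (u t))) (snd (Defs.c3 (u t))) (fst (Defs.c1 (E t))) (snd (Defs.c1 (E t))) (fst (Defs.c2 (E t))) (snd (Defs.c2 (E t))) (fst (Defs.c3 (E t))) (snd (Defs.c3 (E t))) (fst (Defs.c1 (B t))) (snd (Defs.c1 (B t))) (fst (Defs.c2 (B t))) (snd (Defs.c2 (B t))) (fst (Defs.c3 (B t))) (snd (Defs.c3 (B t))) Hg Hb Hm K1 K2 K3 K4) as [P1 [P2 [P3 P4]]].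
  unfold normUsq, normC3sq, normCsq. rewrite !Cmod_sq.
  split; [exact P1|]. split; [exact P2|].
  exists (dvgen (a1c gamma beta mu * W1 (r1 k * r1 k + r2 k * r2 k + r3 k * r3 k)) (a2c gamma beta mu * W2 (r1 k * r1 k + r2 k * r2 k + r3 k * r3 k)) (a3c gamma beta mu * W3 (r1 k * r1 k + r2 k * r2 k + r3 k * r3 k)) gamma beta mu (r1 k) (r2 k) (r3 k) (fst (n t)) (snd (n t)) (fst (Defs.c1 (u t))) (snd (Defs.c1 (u t))) (fst (Defs.c2 (u t))) (snd (Defs.c2 (u t))) (fst (Defs.c3 (u t))) (snd (Defs.c3 (u t))) (fst (Defs.c1 (E t))) (snd (Defs.c1 (E t))) (fst (Defs.c2 (E t))) (snd (Defs.c2 (E t))) (fst (Defs.c3 (E t))) (snd (Defs.c3 (E t))) (fst (Defs.c1 (B t))) (snd (Defs.c1 (B t))) (fst (Defs.c2 (B t))) (snd (Defs.c2 (B t))) (fst (Defs.c3 (B t))) (snd (Defs.c3 (B t)))).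
  split; [|split; [exact P3 | exact P4]].
  unfold dvgen.
  exact (Ef_derive (a1c gamma beta mu * W1 (r1 k * r1 k + r2 k * r2 k + r3 k * r3 k)) (a2c gamma beta mu * W2 (r1 k * r1 k + r2 k * r2 k + r3 k * r3 k)) (a3c gamma beta mu * W3 (r1 k * r1 k + r2 k * r2 k + r3 k * r3 k)) (r1 k) (r2 k) (r3 k) _ _ _ _ _ _ _ _ _ _ _ _ _ _ _ _ _ _ _ _ _ _ _ _ _ _ _ _ _ _ _ _ _ _ _ _ _ _ _ _ t D_nr D_ni D_x1 D_y1 D_x2 D_y2 D_x3 D_y3 D_e1 D_f1 D_e2 D_f2 D_e3 D_f3 D_g1 D_h1 D_g2 D_h2 D_g3 D_h3).
Qed.
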